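(* Let $\mathcal{Q}=\{-1,0,1\}$ and, for $t\in\mathbb{R}$, let $[t]_{\mathcal{Q}}=\arg\min_{z\in\mathcal{Q}}|t-z|$ (nearest rounding), applied coordinatewise to vectors in $\mathbb{R}^d$. Fix $\boldsymbol{w}\in\mathbb{R}^d$ and a maximal step size $\eta>0$. Consider the greedy procedure: $\boldsymbol{r}_1=\boldsymbol{w}$, and for $i=1,2,\dots$ (until termination, i.e. until the residual becomes $\boldsymbol{0}$), $$a_i^*=\arg\min_{a\in G_i}\left\|\boldsymbol{r}_i-a\left[\tfrac{\boldsymbol{r}_i}{a}\right]_{\mathcal{Q}}\right\|,\qquad \tilde{\boldsymbol{w}}_i^*=\left[\tfrac{\boldsymbol{r}_i}{a_i^*}\right]_{\mathcal{Q}},\qquad \boldsymbol{r}_{i+1}=\boldsymbol{r}_i-a_i^*\tilde{\boldsymbol{w}}_i^*,$$ where the grid search range is $G_i=\{k\gamma_i : k\in\mathbb{Z}_{>0},\ k\gamma_i\le 2(2^{2-1}-1)\|\boldsymbol{r}_i\|\}$ with step size $\gamma_i>0$. Assume that $\gamma_i\le\min(\Delta_{\boldsymbol{r}_i},\eta)$ for every step $i$ before termination. Let $\ell(\boldsymbol{r},a,\boldsymbol{v})=\|\boldsymbol{r}-a\boldsymbol{v}\|$. Then there is a constant $c>0$ such that $$\ell(\boldsymbol{r}_i,a_i^*,\tilde{\boldsymbol{w}}_i^* )=\mathcal{O}\left(\exp(-ci)+\eta\right).$$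
   Context: $\|\cdot\|$ denotes the Euclidean norm. For $\boldsymbol{t}=(t_1,\dots,t_d)\in\mathbb{R}^d$, the minimal gap of $\boldsymbol{t}$ is $\Delta_{\boldsymbol{t}}=\min\left\{\frac{\left|\,|t_i|-|t_j|\,\right|}{2} : i,j\in\{1,\dots,d\},\ t_i\neq t_j\right\}$. This is the case of bit-width $b=2$ of the $b$-bit quantization set, i.e. the grid $[-1:\epsilon_b:1]$ with $\epsilon_b=1/(2^{b-1}-1)$. *)

(* Defs.v *)
From HB Require Import structures.
From mathcomp Require Import all_boot all_order all_algebra.
From mathcomp Require Import reals.
From mathcomp Require Import sequences.
Set Implicit Arguments. Unset Strict Implicit. Unset Printing Implicit Defensive.
Import Order.TTheory GRing.Theory Num.Theory.
Local Open Scope ring_scope.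

Section Defs.
Variable R : realType.

Definition enorm {d : nat} (v : 'rV[R]_d) : R := Num.sqrt (\sum_(j < d) v 0 j ^+ 2).

Definition inQ (z : R) : Prop := z = -1 \/ z = 0 \/ z = 1.

(* q is a nearest rounding to Q: q t is an argmin over Q of |t - z|
   (any tie-breaking convention is allowed). *)
Definition nearest_rounding (q : R -> R) : Prop :=
  forall t, inQ (q t) /\ (forall z, inQ z -> `|t - q t| <= `|t - z|).

Definition roundQ (q : R -> R) {d : nat} (v : 'rV[R]_d) : 'rV[R]_d :=
  \row_j q (v 0 j).

Definition loss {d : nat} (r : 'rV[R]_d) (a : R) (v : 'rV[R]_d) : R :=
  enorm (r - a *: v).

Definition in_grid {d : nat} (gamma : R) (r : 'rV[R]_d) (a : R) : Prop :=
  exists k : nat, (0 < k)%N /\ a = k%:R * gamma /\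
    a <= 2%:R * (2%:R ^+ (2 - 1) - 1) * enorm r.

(* gamma <= Delta_t, where Delta_t is the minimum of ||t_i|-|t_j||/2 over pairs
   with t_i <> t_j (the minimum over an empty set being +infinity). *)
Definition le_min_gap {d : nat} (gamma : R) (t : 'rV[R]_d) : Prop :=
  forall i j : 'I_d, t 0 i != t 0 j -> gamma <= `| `|t 0 i| - `|t 0 j| | / 2%:R.

(* step i (1-based) is performed: no residual r_1..r_i is zero *)
Definition alive {d : nat} (r : nat -> 'rV[R]_d) (i : nat) : Prop :=
  forall j, (0 < j)%N -> (j <= i)%N -> r j != 0.

Definition greedy_run {d : nat} (q : R -> R) (w : 'rV[R]_d) (gamma : nat -> R)
  (r : nat -> 'rV[R]_d) (a : nat -> R) (v : nat -> 'rV[R]_d) : Prop :=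
  r 1%N = w /\
  forall i, (0 < i)%N -> alive r i ->
    [/\ in_grid (gamma i) (r i) (a i),
        (forall b, in_grid (gamma i) (r i) b ->
           loss (r i) (a i) (roundQ q ((a i)^-1 *: r i))
             <= loss (r i) b (roundQ q (b^-1 *: r i))),
        v i = roundQ q ((a i)^-1 *: r i) &
        r i.+1 = r i - a i *: v i].

End Defs.

(* Main.v *)
Require Import Defs.
From HB Require Import structures.
From mathcomp Require Import all_boot all_order all_algebra.
From mathcomp Require Import reals.
From mathcomp Require Import sequences exp.
From mathcomp Require Import ring lra.
Import Order.TTheory GRing.Theory Num.Theory.
Local Open Scope ring_scope.
Set Implicit Arguments. Unset Strict Implicit.

Section Aux.
Variable R : realType.

Lemma coord_err (q : R -> R) (hq : nearest_rounding q) (b t z : R) :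
  0 < b -> inQ z -> `|t - b * q (b^-1 * t)| <= `|t - b * z|.
Proof.
move=> b0 Hz.
have -> : t - b * q (b^-1 * t) = b * (b^-1 * t - q (b^-1 * t)).
  by rewrite mulrBr mulrA mulfV ?gt_eqF // mul1r.
have -> : t - b * z = b * (b^-1 * t - z).
  by rewrite mulrBr mulrA mulfV ?gt_eqF // mul1r.
rewrite !normrM (gtr0_norm b0) ler_pM2l //.
by case: (hq (b^-1 * t)) => _ /(_ z Hz).
Qed.

Lemma loss_E n (q : R -> R) (r : 'rV[R]_n) b :
  loss r b (roundQ q (b^-1 *: r)) =
  Num.sqrt (\sum_j (r 0 j - b * q (b^-1 * r 0 j)) ^+ 2).
Proof.
rewrite /loss /enorm; congr Num.sqrt; apply: eq_bigr => j _.
by rewrite !mxE.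
Qed.

Lemma sq_le (x y : R) : `|x| <= `|y| -> x ^+ 2 <= y ^+ 2.
Proof.
move=> h; rewrite -(real_normK (num_real x)) -(real_normK (num_real y)).
by apply: lerXn2r => //; rewrite nnegrE.
Qed.

Lemma loss_le_norm n (q : R -> R) (hq : nearest_rounding q) (r : 'rV[R]_n) b :
  0 < b -> loss r b (roundQ q (b^-1 *: r)) <= enorm r.
Proof.
move=> b0; rewrite loss_E /enorm ler_sqrt; last by apply: sumr_ge0 => j _; exact: sqr_ge0.
apply: ler_sum => j _; apply: sq_le.
have := coord_err hq (r 0 j) b0 (or_intror (or_introl erefl)).
by rewrite mulr0 subr0.
Qed.

Lemma alg_ineq (s M g u : R) : 0 <= s -> 0 < g -> 0 < u -> u <= 1 ->
  u * s ^+ 2 <= M ^+ 2 -> s ^+ 2 - M ^+ 2 + g ^+ 2 <= ((1 - u / 2) * s + g) ^+ 2.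
Proof.
move=> s0 g0 u0 u1 h.
have p1 : 0 <= (1 - u / 2) * s * g.
  by rewrite mulr_ge0 // ?mulr_ge0 //; [lra | exact: ltW].
have p2 : 0 <= (u * s) * (u * s) by rewrite -expr2; exact: sqr_ge0.
nra.
Qed.

Lemma step n (q : R -> R) (hq : nearest_rounding q) (r : 'rV[R]_n.+1)
  (gamma eta a : R) :
  0 < gamma -> gamma <= eta -> in_grid gamma r a ->
  (forall b, in_grid gamma r b ->
     loss r a (roundQ q (a^-1 *: r)) <= loss r b (roundQ q (b^-1 *: r))) ->
  loss r a (roundQ q (a^-1 *: r)) <=
    (1 - (n.+1%:R)^-1 / 2) * enorm r + n.+1%:R * eta.
Proof.
move=> g0 ge [k [k0 [-> _]]] Hmin.
set D : R := n.+1%:R.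
have D1 : 1 <= D by rewrite /D ler1n.
set u := D^-1.
have D0 : 0 < D by rewrite /D ltr0n.
have u0 : 0 < u by rewrite /u invr_gt0.
have Du : D * u = 1 by rewrite /u mulfV // gt_eqF.
have u1 : u <= 1 by rewrite /u invf_le1.
set S := \sum_j r 0 j ^+ 2.
have S0 : 0 <= S by apply: sumr_ge0 => j _; exact: sqr_ge0.
have enE : enorm r = Num.sqrt S by [].
set j0 := [arg max_(j > (ord0 : 'I_n.+1)) `|r 0 j|]%O.
have Hmax : forall j, `|r 0 j| <= `|r 0 j0|.
  have hr : {in predT, forall j : 'I_n.+1, `|r 0 j| \is Num.real}.
    by move=> j _; exact: num_real.
  rewrite /j0; case: (@real_arg_maxP R _ ord0 predT (fun j => `|r 0 j|) isT hr).
  by move=> j _ H j'; exact: H.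
set M := `|r 0 j0|.
have M0 : 0 <= M by exact: normr_ge0.
have HS1 : S <= D * M ^+ 2.
  apply: (@le_trans _ _ (\sum_(j < n.+1) M ^+ 2)).
    apply: ler_sum => j _; apply: sq_le; rewrite normr_id; exact: Hmax.
  by rewrite sumr_const card_ord -mulr_natl.
have HS2 : M ^+ 2 <= S.
  rewrite /S (bigD1 j0) //= -[M ^+ 2]addr0 /M (real_normK (num_real _)).
  by rewrite lerD2l; apply: sumr_ge0 => j _; exact: sqr_ge0.
have sS0 : 0 <= Num.sqrt S by exact: sqrtr_ge0.
have sSE : Num.sqrt S ^+ 2 = S by rewrite sqr_sqrtr.
have Ms : M <= Num.sqrt S.
  by rewrite -(ger0_norm M0) -sqrtr_sqr ler_sqrt.
have uS : u * S <= M ^+ 2.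
  have h := ler_wpM2l (ltW u0) HS1; by rewrite mulrA [u * D]mulrC Du mul1r in h.
have a0 : 0 < k%:R * gamma by rewrite mulr_gt0 // ltr0n.
rewrite enE.
case: (ltP M gamma) => HMg.
  apply: (le_trans (loss_le_norm hq r a0)); rewrite enE.
  have : Num.sqrt S <= D * gamma.
    rewrite -(ger0_norm (_ : 0 <= D * gamma)); last by rewrite mulr_ge0 //; lra.
    rewrite -sqrtr_sqr ler_sqrt; last exact: sqr_ge0.
    apply: (le_trans HS1).
    have : M ^+ 2 <= gamma ^+ 2 by apply: sq_le; rewrite !ger0_norm //; [lra|lra].
    by move=> h; nra.
  move=> h; nra.
pose k' := Num.trunc (M / gamma).
have Mg0 : 0 <= M / gamma by rewrite divr_ge0 //; exact: ltW.
have Hk1 : k'%:R <= M / gamma by rewrite truncn_le.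
have Hk2 : M / gamma < k'.+1%:R by exact: truncnS_gt.
have k'0 : (0 < k')%N by rewrite truncn_gt0 ler_pdivlMr // mul1r.
set b := k'%:R * gamma.
have bM : b <= M by rewrite /b -ler_pdivlMr.
have Mb : M < b + gamma.
  by rewrite /b -[X in _ + X]mul1r -mulrDl -ltr_pdivrMr // natr1.
have b0 : 0 < b by rewrite /b mulr_gt0 // ltr0n.
have bgrid : in_grid gamma r b.
  exists k'; split => //; split => //.
  have -> : (2%:R : R) * (2%:R ^+ (2 - 1) - 1) = 2 by rewrite expr1; lra.
  rewrite -/(enorm r) enE; lra.
apply: (le_trans (Hmin b bgrid)); rewrite loss_E.
set e := fun j => r 0 j - b * q (b^-1 * r 0 j).
have He : forall j, `|e j| <= `|r 0 j|.
  move=> j; have := coord_err hq (r 0 j) b0 (or_intror (or_introl erefl)).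
  by rewrite mulr0 subr0.
have He0 : `|e j0| <= gamma.
  pose z : R := if 0 <= r 0 j0 then 1 else -1.
  have Hz : inQ z by rewrite /z; case: ifP => _; [right; right | left].
  apply: (le_trans (coord_err hq (r 0 j0) b0 Hz)).
  have -> : `|r 0 j0 - b * z| = M - b.
    rewrite /z /M; case: ifP => h.
      by rewrite mulr1 (ger0_norm h) ger0_norm // subr_ge0 -(ger0_norm h).
    move/negbT: h; rewrite -ltNge => h.
    have bM' := bM; rewrite /M (ltr0_norm h) in bM'.
    rewrite (ltr0_norm h) mulrN1 opprK ler0_norm; lra.
  lra.
have Hsum : \sum_j e j ^+ 2 <= S - M ^+ 2 + gamma ^+ 2.
  have MM : M ^+ 2 = r 0 j0 ^+ 2 by rewrite /M real_normK // num_real.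
  rewrite /S MM (bigD1 j0 (F := fun j => r 0 j ^+ 2)) //= (bigD1 j0) //=.
  have h1 : e j0 ^+ 2 <= gamma ^+ 2.
    by apply: sq_le; rewrite (ger0_norm (ltW g0)).
  have h2 : \sum_(j < n.+1 | j != j0) e j ^+ 2 <= \sum_(j < n.+1 | j != j0) r 0 j ^+ 2.
    by apply: ler_sum => j _; apply: sq_le.
  lra.
have Hfin := alg_ineq sS0 g0 u0 u1 (eq_ind_r (fun X => u * X <= M ^+ 2) uS sSE).
rewrite sSE in Hfin.
set s := Num.sqrt S in Hfin *.
apply: (@le_trans _ _ ((1 - u / 2) * s + gamma)).
  have hs : 0 <= s := sS0.
  rewrite -(ger0_norm (_ : 0 <= (1 - u / 2) * s + gamma)); last first.
    by apply: addr_ge0; [apply: mulr_ge0 => //; lra | exact: ltW].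
  rewrite -sqrtr_sqr ler_sqrt; last exact: sqr_ge0.
  exact: le_trans Hsum Hfin.
rewrite lerD2l; apply: (le_trans ge); rewrite ler_peMl //; lra.
Qed.

End Aux.

Theorem theorem1 (R : realType) (d : nat) (w : 'rV[R]_d) :
  exists c : R, 0 < c /\ exists C : R, 0 < C /\
  forall (eta : R) (gamma : nat -> R) (q : R -> R)
         (r : nat -> 'rV[R]_d) (a : nat -> R) (v : nat -> 'rV[R]_d),
    0 < eta ->
    nearest_rounding q ->
    (forall i, (0 < i)%N -> alive r i ->
       [/\ 0 < gamma i, le_min_gap (gamma i) (r i) & gamma i <= eta]) ->
    greedy_run q w gamma r a v ->
    forall i, (0 < i)%N -> alive r i ->
      loss (r i) (a i) (v i) <= C * (expR (- (c * i%:R)) + eta).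
Proof.
case: d w => [|n] w.
  exists 1; split => //; exists 1; split => //.
  move=> eta gamma q r a v eta0 _ _ _ i _ _.
  rewrite /loss /enorm big_ord0 sqrtr0 mul1r.
  by apply: addr_ge0; [exact: ltW (expR_gt0 _) | exact: ltW].
set D : R := n.+1%:R.
have D0 : 0 < D by rewrite /D ltr0n.
have D1 : 1 <= D by rewrite /D ler1n.
set u := D^-1.
have u0 : 0 < u by rewrite /u invr_gt0.
have Du : D * u = 1 by rewrite /u mulfV // gt_eqF.
have u1 : u <= 1 by rewrite /u invf_le1.
exists (u / 2); split; first by lra.
have w0 : 0 <= enorm w by exact: sqrtr_ge0.
exists (enorm w + 2 * D ^+ 2 + 1); split.
  have : 0 <= D ^+ 2 by exact: sqr_ge0.
  lra.
move=> eta gamma q r a v eta0 hq hg [r1 hrun] i i0 hal.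
set rho := 1 - u / 2.
have rho0 : 0 <= rho by rewrite /rho; lra.
have one : forall i, (0 < i)%N -> alive r i ->
    enorm (r i.+1) <= rho * enorm (r i) + D * eta.
  move=> k k0 halk.
  have [hgrid hmin hv hr] := hrun k k0 halk.
  have [g0 _ ge] := hg k k0 halk.
  rewrite hr hv.
  exact: (step hq g0 ge hgrid hmin).
have key : forall j, alive r j.+1 ->
    enorm (r j.+2) <= rho ^+ j.+1 * enorm w + 2 * D ^+ 2 * eta.
  elim=> [|j IH] halj.
    apply: (le_trans (one 1%N isT halj)); rewrite r1 expr1.
    rewrite lerD2l; nra.
  have halj' : alive r j.+1.
    by move=> m m0 mj; apply: halj => //; exact: leqW.
  apply: (le_trans (one j.+2 isT halj)).
  have h := IH halj'.
  have h' := ler_wpM2l rho0 h.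
  apply: (le_trans (lerD h' (lexx (D * eta)))).
  rewrite mulrDr mulrA -exprS -addrA lerD2l.
  have -> : rho * (2 * D ^+ 2 * eta) + D * eta = 2 * D ^+ 2 * eta.
    have uDD : u * D ^+ 2 = D by rewrite expr2 mulrA [u * D]mulrC Du mul1r.
    have -> : rho * (2 * D ^+ 2 * eta) = 2 * D ^+ 2 * eta - (u * D ^+ 2) * eta.
      by rewrite /rho; field.
    rewrite uDD; lra.
  by [].
case: i i0 hal => // j _ halj.
have [_ _ hv hr] := hrun j.+1 isT halj.
have -> : loss (r j.+1) (a j.+1) (v j.+1) = enorm (r j.+2) by rewrite hr.
apply: (le_trans (key j halj)).
set E := expR _.
have E0 : 0 <= E by exact: ltW (expR_gt0 _).
have rE : rho ^+ j.+1 <= E.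
  rewrite /E -mulNr expRM_natr.
  apply: lerXn2r; rewrite ?nnegrE //; first exact: ltW (expR_gt0 _).
  by have := expR_ge1Dx (- (u / 2)); rewrite /rho.
have h1 : rho ^+ j.+1 * enorm w <= E * enorm w by exact: ler_wpM2r.
have h2 : 0 <= (2 * D ^+ 2 + 1) * E by apply: mulr_ge0 => //; have := sqr_ge0 D; lra.
have h3 : 0 <= (enorm w + 1) * eta by apply: mulr_ge0; lra.
nra.
Qed.
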